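(* Let $h:(\mathbb{R}^n,0)\to(\mathbb{R}^n,0)$ be an (SSP) bi-Lipschitz homeomorphism germ, and let $A\subset\mathbb{R}^n$ be a set-germ at $0$ with $0\in\overline{A}$. Then $A$ satisfies condition (SSP) if and only if $h(A)$ satisfies condition (SSP).
   Context: For a set-germ $A\subset\mathbb{R}^k$ at $0$ with $0\in\overline A$, the direction set is $D(A)=\{a\in S^{k-1}:\exists\, x_i\in A\setminus\{0\},\ x_i\to0,\ x_i/\|x_i\|\to a\}$. For sequences, $\|u_m\|\ll\|v_m\|,\|w_m\|$ means $\|u_m\|/\|v_m\|\to0$ and $\|u_m\|/\|w_m\|\to0$. A set-germ $A\subset\mathbb{R}^k$ with $0\in\overline A$ satisfies condition (SSP) if for every sequence $a_m\in\mathbb{R}^k$ tending to $0$ with $\lim a_m/\|a_m\|\in D(A)$ there is a sequence $b_m\in A$ with $\|a_m-b_m\|\ll\|a_m\|,\|b_m\|$. A map germ $h:(\mathbb{R}^n,0)\to(\mathbb{R}^n,0)$ is an (SSP) map if its graph $\{(x,h(x))\}\subset\mathbb{R}^n\times\mathbb{R}^n$ satisfies condition (SSP) at $(0,0)$. A bi-Lipschitz homeomorphism germ is a homeomorphism germ $h$ with $h(0)=0$ and constants $0<K_1\le K_2$ with $K_1\|x-y\|\le\|h(x)-h(y)\|\le K_2\|x-y\|$ near $0$; it is an (SSP) bi-Lipschitz homeomorphism if it is moreover an (SSP) map. *)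

(* Defs.v *)
(* R : realType, R^k represented as row vectors 'rV[R]_k. *)
From HB Require Import structures.
From mathcomp Require Import all_boot all_order all_algebra.
From mathcomp Require Import reals.
Set Implicit Arguments. Unset Strict Implicit. Unset Printing Implicit Defensive.
Import Order.TTheory GRing.Theory Num.Theory.
Local Open Scope ring_scope.

Section SSPDefs.
Variable R : realType.

Definition enorm {k : nat} (x : 'rV[R]_k) : R :=
  Num.sqrt (\sum_(i < k) (x ord0 i) ^+ 2).

Definition seq_cvg {k : nat} (u : nat -> 'rV[R]_k) (l : 'rV[R]_k) : Prop :=
  forall eps : R, 0 < eps -> exists N : nat, forall m : nat,
    (N <= m)%N -> enorm (u m - l) < eps.

Definition zero_in_closure {k : nat} (A : 'rV[R]_k -> Prop) : Prop :=
  forall eps : R, 0 < eps -> exists x, A x /\ enorm x < eps.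

Definition direction_set {k : nat} (A : 'rV[R]_k -> Prop) (a : 'rV[R]_k) : Prop :=
  enorm a = 1 /\
  exists x : nat -> 'rV[R]_k,
    (forall i, A (x i) /\ x i != 0) /\ seq_cvg x 0 /\
    seq_cvg (fun i => (enorm (x i))^-1 *: x i) a.

(* ||u_m|| << ||v_m||: the ratio is eventually defined and tends to 0 *)
Definition seq_ll {k : nat} (u v : nat -> 'rV[R]_k) : Prop :=
  (exists N : nat, forall m : nat, (N <= m)%N -> v m != 0) /\
  forall eps : R, 0 < eps -> exists N : nat, forall m : nat,
    (N <= m)%N -> enorm (u m) / enorm (v m) < eps.

Definition SSP {k : nat} (A : 'rV[R]_k -> Prop) : Prop :=
  forall a : nat -> 'rV[R]_k,
    seq_cvg a 0 ->
    (exists d, direction_set A d /\ seq_cvg (fun m => (enorm (a m))^-1 *: a m) d) ->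
    exists b : nat -> 'rV[R]_k,
      (forall m, A (b m)) /\
      seq_ll (fun m => a m - b m) a /\ seq_ll (fun m => a m - b m) b.

(* graph of the germ h (represented on the ball of radius r), in R^n x R^n = R^(n+n) *)
Definition graph_germ {n : nat} (h : 'rV[R]_n -> 'rV[R]_n) (r : R) :
  'rV[R]_(n + n) -> Prop :=
  fun z => exists x, enorm x < r /\ z = row_mx x (h x).

Definition SSP_map {n : nat} (h : 'rV[R]_n -> 'rV[R]_n) (r : R) : Prop :=
  SSP (graph_germ h r).

(* h is a bi-Lipschitz homeomorphism germ, represented on the ball of radius r
   with constants K1 <= K2; we also record that its image is a neighbourhood of 0
   (a consequence of invariance of domain, part of "homeomorphism germ"). *)
Definition bilip_homeo_germ {n : nat} (h : 'rV[R]_n -> 'rV[R]_n) (r K1 K2 : R) : Prop :=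
  0 < r /\ h 0 = 0 /\ 0 < K1 /\ K1 <= K2 /\
  (forall x y, enorm x < r -> enorm y < r ->
     K1 * enorm (x - y) <= enorm (h x - h y) /\
     enorm (h x - h y) <= K2 * enorm (x - y)) /\
  (exists s : R, 0 < s /\ forall y, enorm y < s -> exists x, enorm x < r /\ h x = y).

Definition image_germ {n : nat} (h : 'rV[R]_n -> 'rV[R]_n) (r : R)
  (A : 'rV[R]_n -> Prop) : 'rV[R]_n -> Prop :=
  fun y => exists x, A x /\ enorm x < r /\ h x = y.

End SSPDefs.

(* Main.v *)
Require Import Defs.
From HB Require Import structures.
From mathcomp Require Import all_boot all_order all_algebra.
From mathcomp Require Import reals topology normedtype sequences.
From mathcomp Require Import ring lra.
From Stdlib Require Import ClassicalEpsilon.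
Import Order.TTheory GRing.Theory Num.Theory.
Import numFieldNormedType.Exports.
Local Open Scope ring_scope.
Set Implicit Arguments. Unset Strict Implicit.
Lemma bw_scalar (R : realType) (u : nat -> R) :
  (forall i, `|u i| <= 1) ->
  exists f : nat -> nat, (forall i, (i <= f i)%N) /\
  exists l : R, forall eps : R, 0 < eps -> exists N : nat, forall m : nat,
    (N <= m)%N -> `|u (f m) - l| < eps.
Proof.
move=> hb.
have bnd : bounded_fun u.
  exists 1; split => // x x1 y _ /=. 
  exact: le_trans (hb y) (ltW x1).
have [f finc fc] := bolzano_weierstrass bnd.
exists f; split.
  move/increasing_seqP: finc => finc. elim=> [//|i IH]. exact: leq_ltn_trans IH (finc i).
exists (limn (u \o f)) => eps e0.
move/cvgrPdist_lt: fc => /(_ eps e0) [N _ HN].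
exists N => m mN. rewrite distrC. exact: HN.
Qed.

Section Norm.
Context {R : realType}.

Definition sq {k : nat} (x : 'rV[R]_k) := \sum_(i < k) (x ord0 i) ^+ 2.
Definition dot {k : nat} (x y : 'rV[R]_k) := \sum_(i < k) (x ord0 i * y ord0 i).

Lemma enormE k (x : 'rV[R]_k) : enorm x = Num.sqrt (sq x).
Proof. by []. Qed.

Lemma sq_ge0 k (x : 'rV[R]_k) : 0 <= sq x.
Proof. by apply: sumr_ge0 => i _; apply: sqr_ge0. Qed.

Lemma enorm_ge0 k (x : 'rV[R]_k) : 0 <= enorm x.
Proof. exact: sqrtr_ge0. Qed.

Lemma enorm_sq k (x : 'rV[R]_k) : enorm x ^+ 2 = sq x.
Proof. by rewrite enormE sqr_sqrtr // sq_ge0. Qed.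

Lemma enorm_eq0 k (x : 'rV[R]_k) : enorm x = 0 -> x = 0.
Proof.
move=> /eqP; rewrite enormE sqrtr_eq0 => h.
have h0 : sq x = 0 by apply/eqP; rewrite eq_le h sq_ge0.
apply/rowP => i; rewrite mxE.
have := @psumr_eq0P _ _ xpredT (fun i => x ord0 i ^+ 2) (fun i _ => sqr_ge0 _) h0 i isT.
by move/eqP; rewrite sqrf_eq0 => /eqP.
Qed.

Lemma enorm0 k : enorm (0 : 'rV[R]_k) = 0.
Proof.
rewrite enormE /sq (eq_bigr (fun _ => 0)) ?big1 ?sqrtr0 // => i _; by rewrite mxE expr0n.
Qed.

Lemma enorm_gt0 k (x : 'rV[R]_k) : x != 0 -> 0 < enorm x.
Proof.
move=> xn; rewrite lt_neqAle enorm_ge0 andbT eq_sym; apply/eqP => /enorm_eq0 h.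
by rewrite h eqxx in xn.
Qed.

Lemma sqZ k (c : R) (x : 'rV[R]_k) : sq (c *: x) = c ^+ 2 * sq x.
Proof.
rewrite /sq mulr_sumr; apply: eq_bigr => i _; by rewrite mxE exprMn.
Qed.

Lemma enormZ k (c : R) (x : 'rV[R]_k) : enorm (c *: x) = `|c| * enorm x.
Proof. by rewrite !enormE sqZ sqrtrM ?sqr_ge0 // sqrtr_sqr. Qed.

Lemma enormN k (x : 'rV[R]_k) : enorm (- x) = enorm x.
Proof. by rewrite -scaleN1r enormZ normrN normr1 mul1r. Qed.

Lemma enormB k (x y : 'rV[R]_k) : enorm (x - y) = enorm (y - x).
Proof. by rewrite -enormN opprB. Qed.

Lemma sq_lin k (p q : R) (u v : 'rV[R]_k) :
  sq (p *: u + q *: v) = p ^+ 2 * sq u + 2 * p * q * dot u v + q ^+ 2 * sq v.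
Proof.
rewrite /sq /dot !mulr_sumr -!big_split /=; apply: eq_bigr => i _.
rewrite !mxE; ring.
Qed.

Lemma cauchy_schwarz k (x y : 'rV[R]_k) : dot x y ^+ 2 <= sq x * sq y.
Proof.
set a := sq x; set b := sq y; set c := dot x y.
have h := sq_ge0 (b *: x + (- c) *: y).
rewrite sq_lin -/a -/b -/c in h.
have hb := sq_ge0 y; rewrite -/b in hb.
case: (ltrgtP b 0) => [bl|bg|b0]; first by rewrite ltNge hb in bl.
  have : 0 <= b * (a * b - c ^+ 2).
    suff <- : b ^+ 2 * a + 2 * b * - c * c + (- c) ^+ 2 * b = b * (a * b - c ^+ 2) by [].
    ring.
  by rewrite pmulr_rge0 // subr_ge0 mulrC.
have y0 : y = 0.
  by apply: enorm_eq0; rewrite enormE -/b b0 sqrtr0.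
by rewrite /c y0 /dot (eq_bigr (fun _ => 0)) ?big1 // ?expr0n ?mulr0 // ?mulr_ge0 ?sq_ge0 // => i _; rewrite mxE mulr0.
Qed.

Lemma enormD k (x y : 'rV[R]_k) : enorm (x + y) <= enorm x + enorm y.
Proof.
rewrite -(ler_pXn2r (n:=2)) ?nnegrE ?addr_ge0 ?enorm_ge0 //.
have -> : x + y = 1 *: x + 1 *: y by rewrite !scale1r.
rewrite enorm_sq sq_lin sqrrD !enorm_sq.
have : dot x y <= enorm x * enorm y.
  apply: le_trans (ler_norm _) _.
  rewrite -sqrtr_sqr enormE enormE -sqrtrM ?sq_ge0 //.
  by rewrite ler_wsqrtr // cauchy_schwarz.
move=> hc; rewrite !expr1n !mul1r mulr1 mulr2n mulr1. lra.
Qed.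


Lemma enorm_dist k (x y : 'rV[R]_k) : `|enorm x - enorm y| <= enorm (x - y).
Proof.
have h1 : enorm x <= enorm (x - y) + enorm y.
  by rewrite -{1}(subrK y x); apply: enormD.
have h2 : enorm y <= enorm (x - y) + enorm x.
  by rewrite enormB -{1}(subrK x y); apply: enormD.
rewrite ler_norml; apply/andP; split; lra.
Qed.

Lemma sq_row k1 k2 (x : 'rV[R]_k1) (y : 'rV[R]_k2) : sq (row_mx x y) = sq x + sq y.
Proof.
rewrite /sq big_split_ord /=; congr (_ + _); apply: eq_bigr => i _.
  by rewrite row_mxEl. by rewrite row_mxEr.
Qed.

Lemma enorm_rowl k1 k2 (x : 'rV[R]_k1) (y : 'rV[R]_k2) : enorm x <= enorm (row_mx x y).
Proof. rewrite !enormE sq_row ler_wsqrtr // lerDl sq_ge0 //. Qed.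

Lemma enorm_rowr k1 k2 (x : 'rV[R]_k1) (y : 'rV[R]_k2) : enorm y <= enorm (row_mx x y).
Proof. rewrite !enormE sq_row ler_wsqrtr // lerDr sq_ge0 //. Qed.

Lemma enorm_row_le k1 k2 (x : 'rV[R]_k1) (y : 'rV[R]_k2) :
  enorm (row_mx x y) <= enorm x + enorm y.
Proof.
have -> : row_mx x y = row_mx x 0 + row_mx 0 y by rewrite add_row_mx addr0 add0r.
apply: le_trans (enormD _ _) _.
have sq0 : forall k, sq (0 : 'rV[R]_k) = 0.
  by move=> k; rewrite /sq big1 // => i _; rewrite mxE expr0n.
by rewrite !enormE !sq_row !sq0 addr0 add0r.
Qed.

Lemma row_mxB k1 k2 (x x' : 'rV[R]_k1) (y y' : 'rV[R]_k2) :
  row_mx x y - row_mx x' y' = row_mx (x - x') (y - y').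
Proof. by rewrite opp_row_mx add_row_mx. Qed.

Lemma coord_le k (x : 'rV[R]_k) j : `|x ord0 j| <= enorm x.
Proof.
rewrite -sqrtr_sqr enormE ler_wsqrtr // /sq (bigD1 j) //= lerDl.
by apply: sumr_ge0 => i _; apply: sqr_ge0.
Qed.

Definition dir {k} (x : 'rV[R]_k) := (enorm x)^-1 *: x.

Lemma dir0 k : dir (0 : 'rV[R]_k) = 0.
Proof. by rewrite /dir scaler0. Qed.

Lemma enorm_dir k (x : 'rV[R]_k) : x != 0 -> enorm (dir x) = 1.
Proof.
move=> xn; have := enorm_gt0 xn => hp.
by rewrite /dir enormZ ger0_norm ?invr_ge0 ?enorm_ge0 // mulVf // gt_eqF.
Qed.

Lemma dirZ k (c : R) (x : 'rV[R]_k) : 0 < c -> dir (c *: x) = dir x.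
Proof.
move=> c0; rewrite /dir enormZ gtr0_norm // scalerA invfM mulrAC mulVf ?gt_eqF // mul1r.
by [].
Qed.

Lemma enorm_dir_scale k (x : 'rV[R]_k) : enorm x *: dir x = x.
Proof.
have [->|xn] := eqVneq x 0; first by rewrite dir0 scaler0.
by rewrite /dir scalerA mulfV ?scale1r // gt_eqF // enorm_gt0.
Qed.

Lemma dir_bound k (a a' : 'rV[R]_k) :
  enorm a * enorm (dir a' - dir a) <= 2 * enorm (a' - a).
Proof.
have [->|an] := eqVneq a 0; first by rewrite enorm0 mul0r mulr_ge0 ?enorm_ge0.
have ap := enorm_gt0 an.
have [->|an'] := eqVneq a' 0.
  rewrite dir0 sub0r !enormN enorm_dir // mulr1 add0r enormN.
  by rewrite ler_peMl ?enorm_ge0 // ler1n.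
have ap' := enorm_gt0 an'.
rewrite -[enorm a]ger0_norm ?enorm_ge0 // -enormZ.
have -> : enorm a *: (dir a' - dir a) = (a' - a) + (enorm a / enorm a' - 1) *: a'.
  rewrite scalerBr enorm_dir_scale /dir scalerA scalerBl scale1r.
  by rewrite [enorm a / _]mulrC -[X in _ = X]addrA addrC -addrA [- a + _]addrC subrK.
apply: le_trans (enormD _ _) _.
rewrite enormZ.
have -> : `|enorm a / enorm a' - 1| * enorm a' = `|enorm a - enorm a'|.
  have E : (enorm a / enorm a' - 1) * enorm a' = enorm a - enorm a'.
    by rewrite mulrBl mul1r -mulrA mulVf ?mulr1 // gt_eqF.
  by rewrite -E normrM (ger0_norm (enorm_ge0 a')).
have := enorm_dist a a'; rewrite [enorm (a - a')]enormB. lra.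
Qed.

Definition ev (P : nat -> Prop) := exists N, forall m, (N <= m)%N -> P m.

Lemma evA (P Q : nat -> Prop) : ev P -> ev Q -> ev (fun m => P m /\ Q m).
Proof.
move=> [N1 h1] [N2 h2]; exists (maxn N1 N2) => m hm; split.
  by apply: h1; apply: leq_trans hm; apply: leq_maxl.
by apply: h2; apply: leq_trans hm; apply: leq_maxr.
Qed.

Lemma evW (P Q : nat -> Prop) : (forall m, P m -> Q m) -> ev P -> ev Q.
Proof. by move=> hPQ [N h]; exists N => m hm; apply: hPQ; apply: h. Qed.

Lemma evT (P : nat -> Prop) : (forall m, P m) -> ev P.
Proof. by move=> h; exists 0%N => m _. Qed.

Definition o_ {k} (w : nat -> 'rV[R]_k) (t : nat -> R) :=
  forall eps, 0 < eps -> ev (fun m => enorm (w m) <= eps * t m).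

Lemma cvg_sub k (u : nat -> 'rV[R]_k) l (f : nat -> nat) :
  seq_cvg u l -> (forall i, (i <= f i)%N) -> seq_cvg (fun i => u (f i)) l.
Proof.
move=> hu hf eps e0; have [N hN] := hu eps e0; exists N => m hm.
by apply: hN; apply: leq_trans hm (hf m).
Qed.

Lemma ev_ge (P : nat -> Prop) (f : nat -> nat) :
  (forall i, (i <= f i)%N) -> ev P -> ev (fun i => P (f i)).
Proof.
move=> hf [N hN]; exists N => m hm; apply: hN; exact: leq_trans hm (hf m).
Qed.

Lemma le_of_eps (x y : R) : (forall eps, 0 < eps -> x <= y + eps) -> x <= y.
Proof. by move=> h; apply/ler_addgt0Pr => e e0; apply: h. Qed.

Lemma cvg_norm_ge k (u : nat -> 'rV[R]_k) l c :
  seq_cvg u l -> ev (fun m => c <= enorm (u m)) -> c <= enorm l.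
Proof.
move=> hu hc; apply: le_of_eps => eps e0.
have [N hN] := evA hc (hu eps e0).
have [h1 h2] := hN N (leqnn N).
have := enorm_dist (u N) l; rewrite ler_norml => /andP [_ h3]. lra.
Qed.

Lemma cvg_norm_eq k (u : nat -> 'rV[R]_k) l c :
  seq_cvg u l -> ev (fun m => enorm (u m) = c) -> enorm l = c.
Proof.
move=> hu hc; apply/eqP; rewrite eq_le; apply/andP; split; last first.
  by apply: cvg_norm_ge hu _; apply: evW hc => m ->.
apply: le_of_eps => eps e0.
have [N hN] := evA hc (hu eps e0).
have [h1 h2] := hN N (leqnn N).
have := enorm_dist (u N) l; rewrite ler_norml => /andP [h3 _]. lra.
Qed.

Lemma cvg_uniq k (u : nat -> 'rV[R]_k) l1 l2 :
  seq_cvg u l1 -> seq_cvg u l2 -> l1 = l2.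
Proof.
move=> h1 h2; apply/eqP; rewrite -subr_eq0; apply/eqP; apply: enorm_eq0.
apply/eqP; rewrite eq_le enorm_ge0 andbT; apply: le_of_eps => eps e0.
have e2 : 0 < eps / 2 by rewrite divr_gt0.
have [N hN] := evA (h1 _ e2) (h2 _ e2).
have [a1 a2] := hN N (leqnn N).
have : l1 - l2 = - (u N - l1) + (u N - l2) by rewrite opprB addrA subrK.
move=> ->; apply: le_trans (enormD _ _) _; rewrite enormN add0r. lra.
Qed.

Lemma dir_nz k (a : nat -> 'rV[R]_k) d :
  enorm d = 1 -> seq_cvg (fun m => dir (a m)) d -> ev (fun m => a m != 0).
Proof.
move=> hd h; apply: evW (h 1 ltr01) => m hm; apply/negP => /eqP am.
by move: hm; rewrite am dir0 sub0r enormN hd ltxx.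
Qed.

Lemma dir_pert k (a a' : nat -> 'rV[R]_k) d :
  seq_cvg (fun m => dir (a m)) d -> o_ (fun m => a' m - a m) (fun m => enorm (a m)) ->
  seq_cvg (fun m => dir (a' m)) d.
Proof.
move=> hd ho eps e0.
have e2 : 0 < eps / 2 by rewrite divr_gt0.
have e4 : 0 < eps / 4 by rewrite divr_gt0.
apply: evW (evA (hd _ e2) (ho _ e4)) => m [h1 h2].
have E : dir (a' m) - d = (dir (a' m) - dir (a m)) + (dir (a m) - d).
  by rewrite addrA subrK.
rewrite E; apply: le_lt_trans (enormD _ _) _.
suff : enorm (dir (a' m) - dir (a m)) <= eps / 2 by lra.
have [am|an] := eqVneq (a m) 0.
  move: h2; rewrite am enorm0 mulr0 subr0 => h2.
  have -> : a' m = 0 by apply: enorm_eq0; apply/eqP; rewrite eq_le h2 enorm_ge0.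
  by rewrite dir0 subrr enorm0 ltW.
have ap := enorm_gt0 an.
have hb := dir_bound (a m) (a' m).
rewrite -(ler_pM2l ap); apply: le_trans hb _.
have -> : enorm (a m) * (eps / 2) = 2 * (eps / 4 * enorm (a m)) by field.
by rewrite ler_pM2l.
Qed.

Lemma o_add k (w1 w2 : nat -> 'rV[R]_k) t :
  o_ w1 t -> o_ w2 t -> o_ (fun m => w1 m + w2 m) t.
Proof.
move=> h1 h2 eps e0; have e2 : 0 < eps / 2 by rewrite divr_gt0.
apply: evW (evA (h1 _ e2) (h2 _ e2)) => m [a1 a2].
apply: le_trans (enormD _ _) _; lra.
Qed.

Lemma o_dom k k' (w : nat -> 'rV[R]_k) (w' : nat -> 'rV[R]_k') t C :
  0 < C -> ev (fun m => enorm (w' m) <= C * enorm (w m)) -> o_ w t -> o_ w' t.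
Proof.
move=> C0 hd ho eps e0; have eC : 0 < eps / C by rewrite divr_gt0.
apply: evW (evA hd (ho _ eC)) => m [a1 a2]; apply: le_trans a1 _.
have -> : eps * t m = C * (eps / C * t m) by field; rewrite gt_eqF.
by rewrite ler_pM2l.
Qed.

Lemma o_mono k (w : nat -> 'rV[R]_k) t t' C :
  0 < C -> ev (fun m => t m <= C * t' m) -> o_ w t -> o_ w t'.
Proof.
move=> C0 hd ho eps e0; have eC : 0 < eps / C by rewrite divr_gt0.
apply: evW (evA hd (ho _ eC)) => m [a1 a2]; apply: le_trans a2 _.
have -> : eps * t' m = eps / C * (C * t' m) by field; rewrite gt_eqF.
by rewrite ler_pM2l.
Qed.

Lemma o_ll k (w a : nat -> 'rV[R]_k) :
  o_ w (fun m => enorm (a m)) -> ev (fun m => a m != 0) -> seq_ll w a.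
Proof.
move=> ho hn; split; first exact: hn.
move=> eps e0; have e2 : 0 < eps / 2 by rewrite divr_gt0.
apply: evW (evA hn (ho _ e2)) => m [a1 a2].
have ap := enorm_gt0 a1.
rewrite ltr_pdivrMr //; apply: le_lt_trans a2 _.
by rewrite ltr_pM2r //; lra.
Qed.

Lemma ll_o k (w a : nat -> 'rV[R]_k) :
  seq_ll w a -> o_ w (fun m => enorm (a m)).
Proof.
move=> [hn ho] eps e0; apply: evW (evA hn (ho _ e0)) => m [a1 a2].
have ap := enorm_gt0 a1.
by move: a2; rewrite ltr_pdivrMr // => /ltW.
Qed.

Lemma finish k (a b : nat -> 'rV[R]_k) :
  o_ (fun m => a m - b m) (fun m => enorm (a m)) -> ev (fun m => a m != 0) ->
  seq_ll (fun m => a m - b m) a /\ seq_ll (fun m => a m - b m) b.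
Proof.
move=> ho hn; split; first exact: o_ll.
have hb : ev (fun m => enorm (a m) <= 2 * enorm (b m)).
  have h2 : (0:R) < 1 / 2 by rewrite divr_gt0.
  apply: evW (ho _ h2) => m h.
  have := enorm_dist (a m) (b m); rewrite ler_norml => /andP [_ h3]. lra.
apply: o_ll.
  by apply: o_mono (hb) ho; lra.
apply: evW (evA hn hb) => m [a1 a2]; apply/negP => /eqP bm.
move: a2; rewrite bm enorm0 mulr0 => h.
have := enorm_gt0 a1; lra.
Qed.

Lemma bw_coords k (w : nat -> 'rV[R]_k) : (forall i j, `|w i ord0 j| <= 1) ->
  forall s : seq 'I_k, exists f : nat -> nat, (forall i, (i <= f i)%N) /\
  exists l : 'I_k -> R, forall eps, 0 < eps ->
    ev (fun m => forall j, j \in s -> `|w (f m) ord0 j - l j| < eps).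
Proof.
move=> hb; elim=> [|j s [f [hf [l hl]]]].
  by exists id; split => // ; exists (fun=> 0) => eps _; apply: evT.
have [g [hg [lj hlj]]] := @bw_scalar R (fun i => w (f i) ord0 j) (fun i => hb _ _).
exists (fun i => f (g i)); split.
  by move=> i; apply: leq_trans (hg i) (hf _).
exists (fun j' => if j' == j then lj else l j') => eps e0.
apply: evW (evA (ev_ge hg (hl eps e0)) (hlj eps e0)) => m [h1 h2] j'.
rewrite in_cons; case: eqP => [-> _|_ /= js]; first by [].
exact: h1.
Qed.

Lemma bw_vec k (w : nat -> 'rV[R]_k) : (forall i, enorm (w i) <= 1) ->
  exists f : nat -> nat, (forall i, (i <= f i)%N) /\
  exists l, seq_cvg (fun i => w (f i)) l.
Proof.
move=> hb.
have hc : forall i j, `|w i ord0 j| <= 1 by move=> i j; apply: le_trans (coord_le _ _) (hb i).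
have [f [hf [l hl]]] := bw_coords hc (enum 'I_k).
exists f; split => //; exists (\row_j l j) => eps e0.
set c : R := (k.+2)%:R.
have c2 : 2 <= c by rewrite /c ler_nat.
have c0 : 0 < c by lra.
have e' : 0 < eps / c by rewrite divr_gt0.
apply: evW (hl _ e') => m hm.
rewrite enormE -[X in _ < X](gtr0_norm e0) -sqrtr_sqr ltr_sqrt ?exprn_gt0 //.
have : sq (w (f m) - \row_j l j) <= k%:R * (eps / c) ^+ 2.
  have -> : k%:R * (eps / c) ^+ 2 = \sum_(i < k) (eps / c) ^+ 2.
    by rewrite sumr_const card_ord mulr_natl.
  rewrite /sq.
  apply: ler_sum => j _; rewrite !mxE.
  have := hm j (mem_enum _ _); rewrite ltr_norml => /andP [u1 u2].
  rewrite -(real_normK (num_real (w (f m) ord0 j - l j))) -[X in _ <= X ^+ 2](gtr0_norm e').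
  apply: lerXn2r; rewrite ?nnegrE ?normr_ge0 //.
  by rewrite (gtr0_norm e'); apply: ltW; rewrite ltr_norml u1 u2.
have kc : k%:R <= c by rewrite /c ler_nat; apply: leq_trans (leqnSn k) (leqnSn _).
have ec : eps / c * c = eps by rewrite mulfVK // gt_eqF.
have ee : eps / c < eps by rewrite ltr_pdivrMr // ltr_pMr //; lra.
move=> h; apply: le_lt_trans h _.
have h1 : k%:R * (eps / c) ^+ 2 <= c * (eps / c) ^+ 2 by rewrite ler_pM2r // exprn_gt0.
apply: le_lt_trans h1 _.
rewrite expr2 mulrA [c * _]mulrC ec expr2 ltr_pM2l //.
Qed.

Lemma cvg_ext k (u v : nat -> 'rV[R]_k) l :
  (forall m, u m = v m) -> seq_cvg u l -> seq_cvg v l.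
Proof. by move=> e hu eps e0; apply: evW (hu eps e0) => m; rewrite e. Qed.

Lemma cvg_const k (c : 'rV[R]_k) : seq_cvg (fun _ => c) c.
Proof. by move=> eps e0; apply: evT => m; rewrite subrr enorm0. Qed.

Lemma cvg0_dom k k' (u : nat -> 'rV[R]_k) (v : nat -> 'rV[R]_k') C :
  seq_cvg u 0 -> 0 < C -> ev (fun m => enorm (v m) <= C * enorm (u m)) -> seq_cvg v 0.
Proof.
move=> hu C0 hd eps e0; have eC : 0 < eps / C by rewrite divr_gt0.
apply: evW (evA hd (hu _ eC)) => m [a1 a2]; rewrite subr0; rewrite subr0 in a2.
apply: le_lt_trans a1 _.
have -> : eps = C * (eps / C) by field; rewrite gt_eqF.
by rewrite ltr_pM2l.
Qed.

Lemma ge_div (a b c : R) : 0 < b -> c * b <= a -> c <= a / b.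
Proof. by move=> b0 h; rewrite ler_pdivlMr. Qed.

Lemma dir_cvg_lim k (a' : nat -> 'rV[R]_k) (G : 'rV[R]_k) :
  G != 0 -> seq_cvg a' G -> seq_cvg (fun m => dir (a' m)) (dir G).
Proof.
move=> Gn hc; apply: (@dir_pert _ (fun _ => G)); first exact: cvg_const.
move=> eps e0; have := enorm_gt0 Gn => gp.
by apply: evW (hc _ (mulr_gt0 e0 gp)) => m /ltW.
Qed.

Lemma o_ext k (w w' : nat -> 'rV[R]_k) t :
  (forall m, w m = w' m) -> o_ w t -> o_ w' t.
Proof. by move=> e ho eps e0; apply: evW (ho eps e0) => m; rewrite e. Qed.

Lemma dir_o k (a : nat -> 'rV[R]_k) (G : 'rV[R]_k) : G != 0 ->
  seq_cvg (fun m => dir (a m)) (dir G) ->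
  o_ (fun m => a m - (enorm (a m) / enorm G) *: G) (fun m => enorm (a m) / enorm G).
Proof.
move=> Gn hc eps e0; have gp := enorm_gt0 Gn.
apply: evW (hc _ (divr_gt0 e0 gp)) => m hm.
have -> : a m - (enorm (a m) / enorm G) *: G = enorm (a m) *: (dir (a m) - dir G).
  by rewrite scalerBr enorm_dir_scale /dir scalerA.
rewrite enormZ ger0_norm ?enorm_ge0 //.
have -> : eps * (enorm (a m) / enorm G) = enorm (a m) * (eps / enorm G) by rewrite mulrCA mulrA.
by apply: ler_wpM2l; [apply: enorm_ge0 | apply: ltW].
Qed.

Lemma tau_props k (a : nat -> 'rV[R]_k) (G : 'rV[R]_k) : G != 0 -> seq_cvg a 0 -> ev (fun m => a m != 0) ->
  ev (fun m => 0 < enorm (a m) / enorm G) /\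
  (forall eps, 0 < eps -> ev (fun m => enorm (a m) / enorm G < eps)).
Proof.
move=> Gn a0 an; have gp := enorm_gt0 Gn; split.
  by apply: evW an => m am; rewrite divr_gt0 // enorm_gt0.
move=> eps e0; apply: evW (a0 _ (mulr_gt0 e0 gp)) => m; rewrite subr0 => hm.
by rewrite ltr_pdivrMr.
Qed.

Lemma dir_tG k (x : nat -> 'rV[R]_k) (t : nat -> R) (G : 'rV[R]_k) : G != 0 -> ev (fun m => 0 < t m) ->
  o_ (fun m => x m - t m *: G) t -> seq_cvg (fun m => dir (x m)) (dir G).
Proof.
move=> Gn tp ho; have gp := enorm_gt0 Gn.
apply: (@dir_pert _ (fun m => t m *: G)).
  move=> eps e0; apply: evW tp => m tm.
  by rewrite dirZ // subrr enorm0.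
apply: (o_mono (C := (enorm G)^-1)) ho; first by rewrite invr_gt0.
apply: evW tp => m tm; rewrite enormZ gtr0_norm // mulrCA mulVf ?mulr1 //.
by rewrite gt_eqF.
Qed.

Section Geo.
Variables (n : nat) (h : 'rV[R]_n -> 'rV[R]_n) (r K1 K2 : R).
Hypothesis Hb : bilip_homeo_germ h r K1 K2.

Lemma bl x y : enorm x < r -> enorm y < r ->
  K1 * enorm (x - y) <= enorm (h x - h y) /\ enorm (h x - h y) <= K2 * enorm (x - y).
Proof. by case: Hb => [_ [_ [_ [_ [hL _]]]]]; apply: hL. Qed.

Lemma K1p : 0 < K1. Proof. by case: Hb => [_ [_ [? _]]]. Qed.
Lemma K2p : 0 < K2. Proof. by case: Hb => [_ [_ [? [? _]]]]; apply: lt_le_trans K1p _. Qed.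
Lemma rp : 0 < r. Proof. by case: Hb. Qed.

Lemma bl0 x : enorm x < r -> K1 * enorm x <= enorm (h x) /\ enorm (h x) <= K2 * enorm x.
Proof.
move=> xr; have := bl xr (y := 0); rewrite enorm0 => /(_ rp).
by case: Hb => [_ [h0 _]]; rewrite h0 !subr0.
Qed.

Lemma extract (y : nat -> 'rV[R]_n) :
  (forall i, enorm (y i) < r) -> (forall i, y i != 0) -> seq_cvg y 0 ->
  exists f : nat -> nat, (forall i, (i <= f i)%N) /\ exists G1 G2 : 'rV[R]_n,
  [/\ G1 != 0, G2 != 0, direction_set (graph_germ h r) (row_mx G1 G2),
   seq_cvg (fun i => dir (y (f i))) (dir G1) &
   seq_cvg (fun i => dir (h (y (f i)))) (dir G2)].
Proof.
move=> yr yn yc.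
have k1 := K1p; have k2 := K2p.
pose g i := row_mx (y i) (h (y i)).
have gy i : enorm (y i) <= enorm (g i) by apply: enorm_rowl.
have ghy i : enorm (h (y i)) <= enorm (g i) by apply: enorm_rowr.
have gle i : enorm (g i) <= enorm (y i) + enorm (h (y i)) by apply: enorm_row_le.
have yp i : 0 < enorm (y i) by apply: enorm_gt0.
have gp i : 0 < enorm (g i) by apply: lt_le_trans (yp i) (gy i).
have gn i : g i != 0.
  by apply/negP => /eqP e; have := gp i; rewrite e enorm0 ltxx.
have hb1 : forall i, enorm (dir (g i)) <= 1 by move=> i; rewrite enorm_dir.
have [f [hf [G hG]]] := bw_vec hb1.
exists f; split => //.
pose G1 := lsubmx G; pose G2 := rsubmx G.
have hGs : G = row_mx G1 G2 by rewrite hsubmxK.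
exists G1, G2.
have dg i : dir (g i) - G = row_mx ((enorm (g i))^-1 *: y i - G1) ((enorm (g i))^-1 *: h (y i) - G2).
  by rewrite /dir /g scale_row_mx {1}hGs row_mxB.
have c1 : seq_cvg (fun i => (enorm (g (f i)))^-1 *: y (f i)) G1.
  move=> eps e0; apply: evW (hG eps e0) => m hm.
  by apply: le_lt_trans hm; rewrite dg; apply: enorm_rowl.
have c2 : seq_cvg (fun i => (enorm (g (f i)))^-1 *: h (y (f i))) G2.
  move=> eps e0; apply: evW (hG eps e0) => m hm.
  by apply: le_lt_trans hm; rewrite dg; apply: enorm_rowr.
have hb i := bl0 (yr i).
have G1n : G1 != 0.
  have : (1 + K2)^-1 <= enorm G1.
    apply: (cvg_norm_ge c1); apply: evT => m.
    rewrite enormZ ger0_norm ?invr_ge0 ?enorm_ge0 // mulrC.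
    apply: ge_div; first exact: gp.
    rewrite mulrC ler_pdivrMr ?addr_gt0 //.
    have [_ hk] := hb (f m).
    have := gle (f m); have := yp (f m). nra.
  move=> hge; apply/negP => /eqP e; move: hge; rewrite e enorm0.
  by rewrite leNgt invr_gt0 addr_gt0.
have G2n : G2 != 0.
  have : K1 / (1 + K1) <= enorm G2.
    apply: (cvg_norm_ge c2); apply: evT => m.
    rewrite enormZ ger0_norm ?invr_ge0 ?enorm_ge0 // [(enorm _)^-1 * _]mulrC.
    apply: ge_div; first exact: gp.
    rewrite mulrAC ler_pdivrMr ?addr_gt0 //.
    have [hk _] := hb (f m).
    have := gle (f m); have := ghy (f m). nra.
  move=> hge; apply/negP => /eqP e; move: hge; rewrite e enorm0.
  by rewrite leNgt divr_gt0 ?addr_gt0.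
split => //.
- split.
    rewrite -hGs; apply: (cvg_norm_eq hG); apply: evT => m; exact: enorm_dir.
  exists (fun i => g (f i)); split; [|split].
  + move=> i; split => //; by exists (y (f i)).
  + apply: (@cvg0_dom _ _ (fun i => y (f i)) _ (1 + K2)).
      exact: cvg_sub yc hf.
      by rewrite addr_gt0.
    apply: evT => m; apply: le_trans (gle _) _.
    have [_ hk] := hb (f m); lra.
  + by rewrite -hGs.
- apply: (@cvg_ext _ (fun i => dir ((enorm (g (f i)))^-1 *: y (f i)))).
    by move=> m; rewrite dirZ // invr_gt0.
  exact: dir_cvg_lim.
- apply: (@cvg_ext _ (fun i => dir ((enorm (g (f i)))^-1 *: h (y (f i))))).
    by move=> m; rewrite dirZ // invr_gt0.
  exact: dir_cvg_lim.
Qed.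

Lemma dir_unit k (G : 'rV[R]_k) : enorm G = 1 -> dir G = G.
Proof. by move=> e; rewrite /dir e invr1 scale1r. Qed.

Lemma tangent (Hs : SSP_map h r) G1 G2 :
  direction_set (graph_germ h r) (row_mx G1 G2) ->
  forall (u v : nat -> 'rV[R]_n) (t : nat -> R),
  ev (fun m => 0 < t m) -> (forall eps, 0 < eps -> ev (fun m => t m < eps)) ->
  o_ (fun m => u m - t m *: G1) t -> o_ (fun m => v m - t m *: G2) t ->
  exists p : nat -> 'rV[R]_n, (forall m, enorm (p m) < r) /\
    o_ (fun m => p m - u m) t /\ o_ (fun m => h (p m) - v m) t.
Proof.
move=> HD u v t tp t0 hu hv.
have [G1n _] := HD.
pose G := row_mx G1 G2.
pose c m := row_mx (u m) (v m).
have hcG : o_ (fun m => c m - t m *: G) t.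
  move=> eps e0; have e2 : 0 < eps / 2 by rewrite divr_gt0.
  apply: evW (evA (hu _ e2) (hv _ e2)) => m [a1 a2].
  rewrite /c /G scale_row_mx row_mxB; apply: le_trans (enorm_row_le _ _) _; lra.
have ntG : ev (fun m => enorm (t m *: G) = t m).
  by apply: evW tp => m tm; rewrite enormZ G1n gtr0_norm // mulr1.
have dc : seq_cvg (fun m => dir (c m)) G.
  apply: (@dir_pert _ (fun m => t m *: G)).
    move=> eps e0; apply: evW tp => m tm.
    by rewrite dirZ // dir_unit // subrr enorm0.
  apply: (o_mono (C := 1)) hcG => //.
  by apply: evW ntG => m ->; rewrite mul1r.
have c0 : seq_cvg c 0.
  move=> eps e0; have e2 : 0 < eps / 2 by rewrite divr_gt0.
  apply: evW (evA (evA tp (t0 _ e2)) (evA ntG (hcG _ ltr01))) => m [[a1 a2] [a3 a4]].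
  rewrite subr0 -(subrK (t m *: G) (c m)); apply: le_lt_trans (enormD _ _) _.
  rewrite a3; lra.
have [b [bg [ll1 _]]] := Hs c c0 (ex_intro _ G (conj HD dc)).
have ocb : o_ (fun m => c m - b m) t.
  apply: (o_mono (C := 2)) (ll_o ll1) => //.
  apply: evW (evA ntG (hcG _ ltr01)) => m [a3 a4].
  rewrite -(subrK (t m *: G) (c m)); apply: le_trans (enormD _ _) _.
  rewrite a3; lra.
have ch : forall m, { x | enorm x < r /\ b m = row_mx x (h x) }.
  by move=> m; apply: constructive_indefinite_description; apply: bg.
exists (fun m => proj1_sig (ch m)); split; first by move=> m; case: (ch m) => x [].
have E m : c m - b m = row_mx (u m - proj1_sig (ch m)) (v m - h (proj1_sig (ch m))).
  by rewrite {1}(proj2 (proj2_sig (ch m))) row_mxB.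
split.
- apply: (o_dom (C := 1)) ocb => //; apply: evT => m.
  by rewrite mul1r enormB E enorm_rowl.
- apply: (o_dom (C := 1)) ocb => //; apply: evT => m.
  by rewrite mul1r enormB E enorm_rowr.
Qed.

Lemma fwd (Hs : SSP_map h r) (A : 'rV[R]_n -> Prop) : SSP A -> SSP (image_germ h r A).
Proof.
move=> HA a a0 [d [[dn [z [zA [z0 zd]]]] ad]].
have k1 := K1p; have k2 := K2p; have r0 := rp.
have ch : forall i, { x | A x /\ enorm x < r /\ h x = z i }.
  by move=> i; apply: constructive_indefinite_description; exact: (proj1 (zA i)).
pose y i := proj1_sig (ch i).
have yA i : A (y i) by case: (proj2_sig (ch i)).
have yr i : enorm (y i) < r by case: (proj2_sig (ch i)) => _ [].
have yz i : h (y i) = z i by case: (proj2_sig (ch i)) => _ [].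
have yn i : y i != 0.
  apply/negP => /eqP e; have := proj2 (zA i); rewrite -yz e.
  by case: Hb => [_ [-> _]]; rewrite eqxx.
have yc : seq_cvg y 0.
  apply: (@cvg0_dom _ _ z y K1^-1 z0); first by rewrite invr_gt0.
  apply: evT => m; rewrite ler_pdivlMl // -yz; exact: (proj1 (bl0 (yr m))).
have [f [hf [G1 [G2 [G1n G2n HD c1 c2]]]]] := extract yr yn yc.
have dG : d = dir G2.
  apply: (cvg_uniq (cvg_sub zd hf)); apply: cvg_ext c2 => m; by rewrite yz.
pose t m := enorm (a m) / enorm G2.
have an := dir_nz dn ad.
have [tp t0] := tau_props G2n a0 an.
have hu : o_ (fun m => t m *: G1 - t m *: G1) t.
  move=> eps e0; apply: evW tp => m tm; rewrite subrr enorm0; exact: ltW (mulr_gt0 e0 tm).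
have hv : o_ (fun m => a m - t m *: G2) t by apply: (dir_o G2n); rewrite -dG.
have [p [pr [hp1 hp2]]] := tangent Hs HD tp t0 hu hv.
have [s [s0 hs]] : exists s : R, 0 < s /\ forall y, enorm y < s -> exists x, enorm x < r /\ h x = y.
  by case: Hb => [_ [_ [_ [_ [_ ?]]]]].
have chx : forall m, { x | enorm (a m) < s -> enorm x < r /\ h x = a m }.
  move=> m; apply: constructive_indefinite_description.
  case: (boolP (enorm (a m) < s)) => H.
    by have [x hx] := hs _ H; exists x.
  by exists 0 => [].
pose x m := proj1_sig (chx m).
have as0 : ev (fun m => enorm (a m) < s) by apply: evW (a0 _ s0) => m; rewrite subr0.
have xr : ev (fun m => enorm (x m) < r /\ h (x m) = a m).
  by apply: evW as0 => m H; apply: (proj2_sig (chx m)).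
have hx : o_ (fun m => x m - p m) t.
  apply: (o_dom (C := K1^-1)) hp2; first by rewrite invr_gt0.
  apply: evW xr => m [H1 H2]; rewrite ler_pdivlMl // -H2 enormB.
  exact: (proj1 (bl (pr m) H1)).
have hxG : o_ (fun m => x m - t m *: G1) t.
  apply: o_ext (o_add hx hp1) => m; by rewrite addrA subrK.
have dx := dir_tG G1n tp hxG.
have DA : direction_set A (dir G1).
  split; first exact: enorm_dir.
  exists (fun i => y (f i)); split; [|split] => //.
  exact: cvg_sub yc hf.
have x0 : seq_cvg x 0.
  apply: (@cvg0_dom _ _ a x K1^-1 a0); first by rewrite invr_gt0.
  apply: evW xr => m [H1 H2]; rewrite ler_pdivlMl // -H2.
  exact: (proj1 (bl0 H1)).
have [b' [b'A [ll1 _]]] := HA x x0 (ex_intro _ (dir G1) (conj DA dx)).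
have ob := ll_o ll1.
have b'r : ev (fun m => enorm (b' m) < r).
  have r2 : 0 < r / 2 by rewrite divr_gt0.
  apply: evW (evA (ob _ ltr01) (x0 _ r2)) => m [H1 H2]; rewrite subr0 in H2.
  rewrite -(subrK (x m) (b' m)); apply: le_lt_trans (enormD _ _) _.
  rewrite enormB; lra.
pose b m := if enorm (b' m) < r then h (b' m) else z 0%N.
exists b; split.
  move=> m; rewrite /b; case: ifP => H; last exact: (proj1 (zA 0%N)).
  by exists (b' m).
apply: finish an.
apply: (o_mono (C := K1^-1)); first by rewrite invr_gt0.
  apply: evW xr => m [H1 H2]; rewrite ler_pdivlMl // -H2.
  exact: (proj1 (bl0 H1)).
apply: (o_dom (C := K2)) ob => //.
apply: evW (evA xr b'r) => m [[H1 H2] H3]; rewrite /b H3 -H2.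
exact: (proj2 (bl H1 H3)).
Qed.

Lemma bwd (Hs : SSP_map h r) (A : 'rV[R]_n -> Prop) : SSP (image_germ h r A) -> SSP A.
Proof.
move=> HA a a0 [d [[dn [y [yA [y0 yd]]]] ad]].
have k1 := K1p; have k2 := K2p; have r0 := rp.
have [N0 hN0] := y0 r r0.
pose y' i := y (i + N0)%N.
have y'r i : enorm (y' i) < r by move: (hN0 (i + N0)%N (leq_addl _ _)); rewrite subr0.
have y'n i : y' i != 0 by exact: (proj2 (yA _)).
have y'c : seq_cvg y' 0 by apply: cvg_sub y0 _ => i; apply: leq_addr.
have [f [hf [G1 [G2 [G1n G2n HD c1 c2]]]]] := extract y'r y'n y'c.
have dG : d = dir G1.
  apply: (cvg_uniq _ c1); apply: (@cvg_sub _ _ _ (fun i => f i + N0)%N yd).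
  by move=> i; apply: leq_trans (hf i) (leq_addr _ _).
pose t m := enorm (a m) / enorm G1.
have an := dir_nz dn ad.
have [tp t0] := tau_props G1n a0 an.
have hu : o_ (fun m => a m - t m *: G1) t by apply: (dir_o G1n); rewrite -dG.
have hv : o_ (fun m => t m *: G2 - t m *: G2) t.
  move=> eps e0; apply: evW tp => m tm; rewrite subrr enorm0; exact: ltW (mulr_gt0 e0 tm).
have [p [pr [hp1 hp2]]] := tangent Hs HD tp t0 hu hv.
have ar : ev (fun m => enorm (a m) < r) by apply: evW (a0 _ r0) => m; rewrite subr0.
have hap : o_ (fun m => h (a m) - h (p m)) t.
  apply: (o_dom (C := K2)) hp1 => //.
  apply: evW ar => m H; rewrite [enorm (p m - _)]enormB.
  exact: (proj2 (bl H (pr m))).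
have ha : o_ (fun m => h (a m) - t m *: G2) t.
  apply: o_ext (o_add hap hp2) => m; by rewrite addrA subrK.
have dha := dir_tG G2n tp ha.
have DhA : direction_set (image_germ h r A) (dir G2).
  split; first exact: enorm_dir.
  exists (fun i => h (y' (f i))); split; [|split] => //.
  - move=> i; split; first by exists (y' (f i)); split => //; exact: (proj1 (yA _)).
    apply/negP => /eqP e; have := proj1 (bl0 (y'r (f i))); rewrite e enorm0.
    have := enorm_gt0 (y'n (f i)); nra.
  - apply: (@cvg0_dom _ _ (fun i => y' (f i)) _ K2 (cvg_sub y'c hf)) => //.
    by apply: evT => m; exact: (proj2 (bl0 (y'r _))).
have a0' : seq_cvg (fun m => h (a m)) 0.
  apply: (@cvg0_dom _ _ a _ K2 a0) => //.
  by apply: evW ar => m H; exact: (proj2 (bl0 H)).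
have [be [beA [ll1 _]]] := HA _ a0' (ex_intro _ (dir G2) (conj DhA dha)).
have ch : forall m, { x | A x /\ enorm x < r /\ h x = be m }.
  by move=> m; apply: constructive_indefinite_description; exact: beA.
pose q m := proj1_sig (ch m).
have qA m : A (q m) by case: (proj2_sig (ch m)).
have qr m : enorm (q m) < r by case: (proj2_sig (ch m)) => _ [].
have qz m : h (q m) = be m by case: (proj2_sig (ch m)) => _ [].
exists q; split => //.
apply: finish an.
apply: (o_mono (C := K2)) => //.
  by apply: evW ar => m H; exact: (proj2 (bl0 H)).
apply: (o_dom (C := K1^-1)) (ll_o ll1); first by rewrite invr_gt0.
apply: evW ar => m H; rewrite ler_pdivlMl // -qz.
exact: (proj1 (bl H (qr m))).
Qed.

End Geo.

End Norm.

Theorem theorem4p7 (R : realType) (n : nat) (h : 'rV[R]_n -> 'rV[R]_n)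
  (r K1 K2 : R) (A : 'rV[R]_n -> Prop) :
  bilip_homeo_germ h r K1 K2 -> SSP_map h r -> zero_in_closure A ->
  (SSP A <-> SSP (image_germ h r A)).
Proof.
move=> Hb Hs _; split; [exact: (fwd Hb Hs) | exact: (bwd Hb Hs)].
Qed.
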